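(* Suppose $\mathop{\downarrow}$ is a free amalgamation relation for $T$. Let $a,b$ be closed tuples and $C=a\cap b$. Suppose $\mu$ is an ordinal and $(b_i)_{i<\mu}$ is $\mathop{\downarrow}$-independent over $C$ with $b_0=b$. Then there is a tuple $a_*$ such that $a_*b_i\equiv_C ab$ for all $i<\mu$.
   Context: $T$ complete with monster $\mathbb M$; closed means algebraically closed; $\equiv_C$ means conjugate under automorphisms fixing $C$ pointwise; $AB=A\cup B$; tuples are identified with their ranges. A free amalgamation relation is a ternary relation $\mathop{\downarrow}$ on small subsets of $\mathbb M$ satisfying invariance, monotonicity, symmetry, full transitivity (for $D\subseteq C\subseteq B$: $A\mathop{\downarrow}_D B$ iff $A\mathop{\downarrow}_C B$ and $A\mathop{\downarrow}_D C$), full existence (closed $C$: for any $B$, tuple $a$, some $a'\equiv_C a$ has $a'\mathop{\downarrow}_C B$), stationarity (closed $C$, closed tuples $a,a',b$, $C\subseteq a\cap b$: $a\mathop{\downarrow}_C b$, $a'\mathop{\downarrow}_C b$, $a'\equiv_C a$ imply $ab\equiv_C a'b$), freedom ($A\mathop{\downarrow}_C B$ and $C\cap AB\subseteq D\subseteq C$ imply $A\mathop{\downarrow}_D B$), closure (closed $A,B,C$, $C\subseteq A\cap B$, $A\mathop{\downarrow}_C B$ imply $AB$ closed). For $C\subseteq b_0$, a sequence $(b_i)_{i<\mu}$ is $\mathop{\downarrow}$-independent over $C$ if for all $i<\mu$, $b_i\equiv_C b_0$ and $b_i\mathop{\downarrow}_C \{b_j:j<i\}$. *)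

(* Defs.v *)
From Stdlib Require Import Arith List.
Set Implicit Arguments.
Unset Strict Implicit.

Definition fin (n : nat) := {k : nat | k < n}.

Record lang := Lang {
  fsym : Type; farity : fsym -> nat;
  rsym : Type; rarity : rsym -> nat }.

Inductive term (L : lang) : Type :=
| tvar : nat -> term L
| tapp : forall f : fsym L, (fin (farity f) -> term L) -> term L.
Arguments tvar {L} n.
Arguments tapp {L} f ts.

Inductive formula (L : lang) : Type :=
| Feq : term L -> term L -> formula L
| Frel : forall r : rsym L, (fin (rarity r) -> term L) -> formula L
| Fnot : formula L -> formula L
| Fand : formula L -> formula L -> formula L
| Fex : nat -> formula L -> formula L.   (* Fex n phi = exists x_n, phi *)
Arguments Feq {L} t1 t2.
Arguments Frel {L} r ts.
Arguments Fnot {L} p.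
Arguments Fand {L} p q.
Arguments Fex {L} n p.

Fixpoint tfv (L : lang) (t : term L) (m : nat) : Prop :=
  match t with
  | tvar n => n = m
  | tapp f ts => exists k, @tfv L (ts k) m
  end.

Fixpoint fv (L : lang) (phi : formula L) (m : nat) : Prop :=
  match phi with
  | Feq t1 t2 => tfv t1 m \/ tfv t2 m
  | Frel r ts => exists k, tfv (ts k) m
  | Fnot p => @fv L p m
  | Fand p q => @fv L p m \/ @fv L q m
  | Fex n p => m <> n /\ @fv L p m
  end.

Record structure (L : lang) := Structure {
  dom :> Type;
  finterp : forall f : fsym L, (fin (farity f) -> dom) -> dom;
  rinterp : forall r : rsym L, (fin (rarity r) -> dom) -> Prop }.
Arguments finterp {L} s f _.
Arguments rinterp {L} s r _.

Definition upd (X : Type) (e : nat -> X) (n : nat) (x : X) : nat -> X :=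
  fun m => if Nat.eqb m n then x else e m.

Fixpoint teval (L : lang) (M : structure L) (e : nat -> M) (t : term L) : M :=
  match t with
  | tvar n => e n
  | tapp f ts => finterp M f (fun k => @teval L M e (ts k))
  end.

Fixpoint sat (L : lang) (M : structure L) (e : nat -> M) (phi : formula L) : Prop :=
  match phi with
  | Feq t1 t2 => teval e t1 = teval e t2
  | Frel r ts => rinterp M r (fun k => teval e (ts k))
  | Fnot p => ~ @sat L M e p
  | Fand p q => @sat L M e p /\ @sat L M e q
  | Fex n p => exists x : M, @sat L M (upd e n x) p
  end.
Arguments sat {L} M e phi.

Definition mset (X : Type) := X -> Prop.
Definition subset (X : Type) (A B : mset X) := forall x, A x -> B x.
Definition union (X : Type) (A B : mset X) : mset X := fun x => A x \/ B x.
Definition inter (X : Type) (A B : mset X) : mset X := fun x => A x /\ B x.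
(* tuples are maps I -> X, identified with their ranges *)
Definition rng (X I : Type) (a : I -> X) : mset X := fun x => exists i, a i = x.
Definition tcat (X I J : Type) (a : I -> X) (b : J -> X) : I + J -> X :=
  fun k => match k with inl i => a i | inr j => b j end.
Definition image (X : Type) (s : X -> X) (A : mset X) : mset X :=
  fun y => exists x, A x /\ s x = y.

Definition is_aut (L : lang) (M : structure L) (s : M -> M) : Prop :=
  (exists t : M -> M, (forall x, t (s x) = x) /\ (forall y, s (t y) = y)) /\
  (forall f args, s (finterp M f args) = finterp M f (fun k => s (args k))) /\
  (forall r args, rinterp M r args <-> rinterp M r (fun k => s (args k))).
Arguments is_aut {L} M s.

(* a' ==_C a : conjugate under an automorphism fixing C pointwise *)
Definition conj (L : lang) (M : structure L) (C : mset M) (I : Type)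
  (a a' : I -> M) : Prop :=
  exists s, is_aut M s /\ (forall c, C c -> s c = c) /\ (forall i, s (a i) = a' i).
Arguments conj {L} M C {I} a a'.

Definition acl (L : lang) (M : structure L) (A : mset M) : mset M :=
  fun b => exists (phi : formula L) (n : nat) (e : nat -> M),
    (forall m, fv phi m -> m <> n -> A (e m)) /\
    sat M (upd e n b) phi /\
    (exists l : list M, forall x, sat M (upd e n x) phi -> In x l).
Arguments acl {L} M A _.

Definition closed (L : lang) (M : structure L) (A : mset M) : Prop :=
  subset (acl M A) A.
Arguments closed {L} M A.

(* kappa is represented by a type K; X is small iff |X| < |K| *)
Definition small (K X : Type) : Prop :=
  (exists f : X -> K, forall x y, f x = f y -> x = y) /\
  ~ (exists g : K -> X, forall x y, g x = g y -> x = y).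
Definition smallS (K X : Type) (A : mset X) : Prop := small K {x | A x}.

(* M is a monster model: kappa infinite, M kappa-saturated and strongly
   kappa-homogeneous *)
Definition monster (L : lang) (M : structure L) (K : Type) : Prop :=
  (exists h : nat -> K, forall x y, h x = h y -> x = y) /\
  (* saturation: finitely satisfiable 1-types over small sets are realized *)
  (forall (A : mset M), smallS K A ->
   forall (p : formula L -> (nat -> M) -> Prop),
   (forall phi e, p phi e -> forall m, fv phi m -> m <> 0 -> A (e m)) ->
   (forall l : list (formula L * (nat -> M)),
      (forall q, In q l -> p (fst q) (snd q)) ->
      exists x : M, forall q, In q l -> sat M (upd (snd q) 0 x) (fst q)) ->
   exists x : M, forall phi e, p phi e -> sat M (upd e 0 x) phi) /\
  (forall (I : Type), small K I -> forall a a' : I -> M,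
   (forall (phi : formula L) (g : nat -> I),
      sat M (fun m => a (g m)) phi <-> sat M (fun m => a' (g m)) phi) ->
   exists s, is_aut M s /\ forall i, s (a i) = a' i).
Arguments monster {L} M K.

(* ind A C B  stands for  A |_C B *)
Definition free_amalgamation (L : lang) (M : structure L) (K : Type)
  (ind : mset M -> mset M -> mset M -> Prop) : Prop :=
  (forall A B C s, smallS K A -> smallS K B -> smallS K C -> is_aut M s ->
     ind A C B -> ind (image s A) (image s C) (image s B)) /\
  (forall A A' B B' C, smallS K A -> smallS K B -> smallS K C ->
     ind A C B -> subset A' A -> subset B' B -> ind A' C B') /\
  (forall A B C, smallS K A -> smallS K B -> smallS K C ->
     ind A C B -> ind B C A) /\
  (forall A B C D, smallS K A -> smallS K B -> smallS K C -> smallS K D ->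
     subset D C -> subset C B ->
     (ind A D B <-> ind A C B /\ ind A D C)) /\
  (forall (C B : mset M) (I : Type) (a : I -> M),
     smallS K C -> smallS K B -> small K I -> closed M C ->
     exists a' : I -> M, conj M C a a' /\ ind (rng a') C B) /\
  (forall (C : mset M) (I J : Type) (a a' : I -> M) (b : J -> M),
     smallS K C -> small K I -> small K J ->
     closed M C -> closed M (rng a) -> closed M (rng a') -> closed M (rng b) ->
     subset C (inter (rng a) (rng b)) ->
     ind (rng a) C (rng b) -> ind (rng a') C (rng b) -> conj M C a a' ->
     conj M C (tcat a b) (tcat a' b)) /\
  (forall A B C D, smallS K A -> smallS K B -> smallS K C -> smallS K D ->
     ind A C B -> subset (inter C (union A B)) D -> subset D C -> ind A D B) /\
  (forall A B C, smallS K A -> smallS K B -> smallS K C ->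
     closed M A -> closed M B -> closed M C -> subset C (inter A B) ->
     ind A C B -> closed M (union A B)).
Arguments free_amalgamation {L} M K ind.

(* an ordinal mu is represented by a type J with a strict well-order lt *)
Definition well_order (J : Type) (lt : J -> J -> Prop) : Prop :=
  well_founded lt /\
  (forall x y z, lt x y -> lt y z -> lt x z) /\
  (forall x, ~ lt x x) /\
  (forall x y, lt x y \/ x = y \/ lt y x).

(* (b_j)_{j in J} is |-independent over C, with j0 the least index (b_0) *)
Definition indep_seq (L : lang) (M : structure L)
  (ind : mset M -> mset M -> mset M -> Prop) (C : mset M)
  (J : Type) (lt : J -> J -> Prop) (j0 : J) (I : Type) (b : J -> I -> M) : Prop :=
  forall j, conj M C (b j0) (b j) /\
    ind (rng (b j)) C (fun x => exists j' i, lt j' j /\ b j' i = x).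

Arguments indep_seq {L} M ind C {J} lt j0 {I} b.

(* Main.v *)
Require Import Defs.
From Stdlib Require Import Arith Lia List Classical ClassicalEpsilon FunctionalExtensionality PropExtensionality Cantor.
From mathcomp Require ssreflect ssrfun ssrbool eqtype boolp wochoice.

Module ZornM.
Import ssreflect ssrfun ssrbool eqtype boolp wochoice.

Lemma myzorn (T : eqType) (P : T -> Prop) (le : T -> T -> Prop) :
  (forall x, le x x) -> (forall x y z, le x y -> le y z -> le x z) ->
  (forall C : T -> Prop, (forall x, C x -> P x) ->
     (forall x y, C x -> C y -> le x y \/ le y x) ->
     exists z, P z /\ forall x, C x -> le x z) ->
  exists z, P z /\ forall x, P x -> le z x -> le x z.
Proof.
move=> Hr Ht Hc.
have := @Zorn's_lemma T (fun x y => `[< le x y >]) (fun x => `[< P x >]).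
case.
- by move=> x _; apply/asboolP.
- by move=> y x z _ _ _ /asboolP H1 /asboolP H2; apply/asboolP; apply: Ht H1 H2.
- move=> C sub /wo_chainW ch.
  have H1 : forall x, x \in C -> P x.
    by move=> x xC; have := sub _ xC => /asboolP.
  have H2 : forall x y, x \in C -> y \in C -> le x y \/ le y x.
    by move=> x y xC yC; have := ch x y xC yC => /orP[/asboolP|/asboolP]; auto.
  have [z [Pz Hz]] := Hc (fun x => x \in C) H1 H2.
  exists z; first by apply/asboolP.
  by move=> x xC; apply/asboolP; apply: Hz.
- move=> z /asboolP Pz Hz; exists z; split => // x Px lzx.
  by have := Hz x (asboolT Px) (asboolT lzx) => /asboolP.
Qed.

Lemma zorn2 (X Y : Type) (P : (X -> Y -> Prop) -> Prop) :
  (forall C : (X -> Y -> Prop) -> Prop, (forall R, C R -> P R) ->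
     (forall R1 R2, C R1 -> C R2 ->
        (forall x y, R1 x y -> R2 x y) \/ (forall x y, R2 x y -> R1 x y)) ->
     exists Z, P Z /\ forall R, C R -> forall x y, R x y -> Z x y) ->
  exists Z, P Z /\ forall R, P R -> (forall x y, Z x y -> R x y) ->
     forall x y, R x y -> Z x y.
Proof.
move=> H; apply: (@myzorn (X -> Y -> Prop) P (fun R1 R2 => forall x y, R1 x y -> R2 x y)); auto.
Qed.

Lemma zorn3 (X : Type) (P : (X -> X -> X -> Prop) -> Prop) :
  (forall C : (X -> X -> X -> Prop) -> Prop, (forall R, C R -> P R) ->
     (forall R1 R2, C R1 -> C R2 ->
        (forall x y z, R1 x y z -> R2 x y z) \/ (forall x y z, R2 x y z -> R1 x y z)) ->
     exists Z, P Z /\ forall R, C R -> forall x y z, R x y z -> Z x y z) ->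
  exists Z, P Z /\ forall R, P R -> (forall x y z, Z x y z -> R x y z) ->
     forall x y z, R x y z -> Z x y z.
Proof.
move=> H; apply: (@myzorn (X -> X -> X -> Prop) P (fun R1 R2 => forall x y z, R1 x y z -> R2 x y z)); auto.
Qed.
End ZornM.

Definition injT (X Y : Type) : Prop := exists f : X -> Y, forall x y, f x = f y -> x = y.

Lemma sig_inj (X : Type) (P : X -> Prop) (a b : {x | P x}) : proj1_sig a = proj1_sig b -> a = b.
Proof.
  destruct a as [x p], b as [y q]; simpl; intros ->. f_equal. apply proof_irrelevance.
Qed.

Lemma cmp (X Y : Type) : injT X Y \/ injT Y X.
Proof.
  set (P := fun R : X -> Y -> Prop => (forall x y y', R x y -> R x y' -> y = y') /\
                                     (forall x x' y, R x y -> R x' y -> x = x')).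
  destruct (@ZornM.zorn2 X Y P) as [Rm [[Hf Hi] Hmax]].
  { intros C HC Hch. exists (fun x y => exists R, C R /\ R x y). split; [split|].
    - intros x y y' [R1 [C1 H1]] [R2 [C2 H2]]. destruct (Hch R1 R2 C1 C2) as [L|L].
      + apply (proj1 (HC R2 C2) x); auto.
      + apply (proj1 (HC R1 C1) x); auto.
    - intros x x' y [R1 [C1 H1]] [R2 [C2 H2]]. destruct (Hch R1 R2 C1 C2) as [L|L].
      + apply (proj2 (HC R2 C2) x x' y); auto.
      + apply (proj2 (HC R1 C1) x x' y); auto.
    - intros R CR x y H; exists R; auto. }
  destruct (classic (forall x, exists y, Rm x y)) as [Htot|Hn1].
  - left. exists (fun x => proj1_sig (constructive_indefinite_description _ (Htot x))).
    intros x x' E.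
    destruct (constructive_indefinite_description _ (Htot x)) as [y Hy].
    destruct (constructive_indefinite_description _ (Htot x')) as [y' Hy'].
    simpl in E; subst. eapply Hi; eauto.
  - destruct (classic (forall y, exists x, Rm x y)) as [Hsur|Hn2].
    + right. exists (fun y => proj1_sig (constructive_indefinite_description _ (Hsur y))).
      intros y y' E.
      destruct (constructive_indefinite_description _ (Hsur y)) as [x Hx].
      destruct (constructive_indefinite_description _ (Hsur y')) as [x' Hx'].
      simpl in E; subst. eapply Hf; eauto.
    + exfalso. apply not_all_ex_not in Hn1 as [x0 Hx0].
      apply not_all_ex_not in Hn2 as [y0 Hy0].
      set (R' := fun x y => Rm x y \/ (x = x0 /\ y = y0)).
      assert (PR' : P R').
      { split.
        - intros x y y' [H|[E1 E2]] [H'|[E3 E4]]; subst;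
            [eapply Hf; eauto | exfalso; apply Hx0; eauto | exfalso; apply Hx0; eauto | reflexivity].
        - intros x x' y [H|[E1 E2]] [H'|[E3 E4]]; subst;
            [eapply Hi; eauto | exfalso; apply Hy0; eauto | exfalso; apply Hy0; eauto | reflexivity]. }
      assert (Hc := Hmax R' PR' (fun x y H => or_introl H) x0 y0 (or_intror (Logic.conj eq_refl eq_refl))).
      apply Hx0; eauto.
Qed.

Definition injS (X Y : Type) (A : X -> Prop) (B : Y -> Prop) : Prop :=
  exists g : X -> Y, (forall x, A x -> B (g x)) /\
    (forall x y, A x -> A y -> g x = g y -> x = y).
Arguments injS {X Y} A B.

Lemma injT_injS (X Y : Type) (A : X -> Prop) (B : Y -> Prop) :
  injT {x | A x} {y | B y} -> (exists x, A x) -> injS A B.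
Proof.
  intros [g Hg] [x0 Hx0].
  set (G := fun x => match excluded_middle_informative (A x) with
                     | left H => proj1_sig (g (exist _ x H))
                     | right _ => proj1_sig (g (exist _ x0 Hx0)) end).
  exists G. split.
  - intros x Hx. unfold G. destruct (excluded_middle_informative (A x)) as [H|H].
    + exact (proj2_sig (g _)). + contradiction.
  - intros x y Hx Hy E. unfold G in E.
    destruct (excluded_middle_informative (A x)) as [H|H]; [|contradiction].
    destruct (excluded_middle_informative (A y)) as [H'|H']; [|contradiction].
    apply sig_inj in E. apply Hg in E. apply (f_equal (@proj1_sig _ _)) in E. exact E.
Qed.

Lemma cmpS (X Y : Type) (A : X -> Prop) (B : Y -> Prop) :
  (exists x, A x) -> (exists y, B y) -> injS A B \/ injS B A.
Proof.
  intros HA HB. destruct (cmp {x | A x} {y | B y}) as [H|H]; [left|right];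
  apply injT_injS; auto.
Qed.

Lemma hess (X : Type) : injT nat X -> injT (X*X) X.
Proof.
  intros [h hi].
  assert (h01 : h 0 <> h 1) by (intro E; apply hi in E; discriminate).
  set (Dm := fun (R : X -> X -> X -> Prop) x => exists z, R x x z).
  set (P := fun R : X -> X -> X -> Prop =>
    (forall x y, Dm R x -> Dm R y -> exists z, R x y z) /\
    (forall x y z, R x y z -> Dm R x /\ Dm R y /\ Dm R z) /\
    (forall x y z z', R x y z -> R x y z' -> z = z') /\
    (forall x y z x' y', R x y z -> R x' y' z -> x = x' /\ y = y') /\
    Dm R (h 0) /\ Dm R (h 1)).
  set (R0 := fun x y z => exists m n, x = h m /\ y = h n /\ z = h (to_nat (m,n))).
  assert (DR0 : forall m, Dm R0 (h m)).
  { intro m; exists (h (to_nat (m,m))); exists m, m; auto. }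
  assert (P0 : P R0).
  { split; [|split; [|split; [|split; [|split]]]]; auto.
    - intros x y [z [m [m' [E1 [E2 E3]]]]] [z' [n [n' [F1 [F2 F3]]]]]. subst.
      exists (h (to_nat (m,n))); exists m, n; auto.
    - intros x y z [m [n [E1 [E2 E3]]]]. subst. auto.
    - intros x y z z' [m [n [E1 [E2 E3]]]] [m' [n' [F1 [F2 F3]]]]. subst.
      apply hi in F1; apply hi in F2; subst; auto.
    - intros x y z x' y' [m [n [E1 [E2 E3]]]] [m' [n' [F1 [F2 F3]]]]. subst.
      apply hi in F3. apply to_nat_inj in F3. inversion F3; subst; auto. }
  destruct (@ZornM.zorn3 X P) as [Rm [PRm Hmax]].
  { intros C HC Hch. destruct (classic (exists R, C R)) as [[R1 CR1]|Hne].
    - set (U := fun x y z => exists R, C R /\ R x y z).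
      assert (DU : forall x, Dm U x <-> exists R, C R /\ Dm R x).
      { intro x; split.
        - intros [z [R [CR H]]]; exists R; split; auto; exists z; auto.
        - intros [R [CR [z H]]]; exists z, R; auto. }
      assert (big : forall A B, C A -> C B -> exists R3, C R3 /\
         (forall x y z, A x y z -> R3 x y z) /\ (forall x y z, B x y z -> R3 x y z)).
      { intros A B CA CB. destruct (Hch A B CA CB) as [L|L]; [exists B|exists A]; auto. }
      exists U. split.
      + split; [|split; [|split; [|split; [|split]]]].
        * intros x y Hx Hy. apply DU in Hx as [A [CA [zx Hx]]]. apply DU in Hy as [B [CB [zy Hy]]].
          destruct (big A B CA CB) as [R3 [C3 [L1 L2]]].
          destruct (HC R3 C3) as [T1 _].
          destruct (T1 x y) as [z Hz]. exists zx; auto. exists zy; auto.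
          exists z, R3; auto.
        * intros x y z [R [CR H]]. destruct (HC R CR) as [_ [T2 _]].
          destruct (T2 x y z H) as [D1 [D2 D3]].
          repeat split; apply DU; exists R; auto.
        * intros x y z z' [A [CA H]] [B [CB H']]. destruct (big A B CA CB) as [R3 [C3 [L1 L2]]].
          destruct (HC R3 C3) as [_ [_ [T3 _]]]. apply (T3 x y); auto.
        * intros x y z x' y' [A [CA H]] [B [CB H']]. destruct (big A B CA CB) as [R3 [C3 [L1 L2]]].
          destruct (HC R3 C3) as [_ [_ [_ [T4 _]]]]. apply (T4 x y z x' y'); auto.
        * apply DU. exists R1. split; auto. apply (HC R1 CR1).
        * apply DU. exists R1. split; auto. apply (HC R1 CR1).
      + intros R CR x y z H. exists R; auto.
    - exists R0. split; auto. intros R CR; exfalso; apply Hne; eauto. }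
  unfold P in PRm. destruct PRm as [Tot [Dom [Fun [Inj [D0 D1]]]]].
  set (D := Dm Rm) in *.
  assert (inh : inhabited X) by exact (inhabits (h 0)).
  set (f2 := fun x y => epsilon inh (fun z => Rm x y z)).
  assert (f2s : forall x y, D x -> D y -> Rm x y (f2 x y)).
  { intros x y Hx Hy. unfold f2. apply epsilon_spec. apply Tot; auto. }
  assert (f2D : forall x y, D x -> D y -> D (f2 x y)).
  { intros x y Hx Hy. destruct (Dom _ _ _ (f2s x y Hx Hy)) as [_ [_ H']]; exact H'. }
  assert (f2i : forall x y x' y', D x -> D y -> D x' -> D y' -> f2 x y = f2 x' y' -> x = x' /\ y = y').
  { intros x y x' y' Hx Hy Hx' Hy' E. apply (Inj x y (f2 x y) x' y'); auto. rewrite E. auto. }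
  assert (Hemb : exists iota : X -> X, (forall x, D (iota x)) /\ forall x y, iota x = iota y -> x = y).
  { apply NNPP. intro Hno.
    destruct (@cmpS X X (fun x => ~ D x) D) as [[g [g1 g2]]|[phi [p1 p2]]].
    - apply NNPP; intro Hall. apply Hno. exists (fun x => x). split; auto.
      intros x; apply NNPP; intro; apply Hall; eauto.
    - exists (h 0); auto.
    - apply Hno.
      exists (fun x => if excluded_middle_informative (D x) then f2 x (h 0) else f2 (g x) (h 1)).
      split.
      + intro x. destruct (excluded_middle_informative (D x)); apply f2D; auto.
      + intros x y E. destruct (excluded_middle_informative (D x)) as [Hx|Hx];
          destruct (excluded_middle_informative (D y)) as [Hy|Hy].
        * apply f2i in E; tauto.
        * apply f2i in E; auto. destruct E as [_ E]; contradiction.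
        * apply f2i in E; auto. destruct E as [_ E]; symmetry in E; contradiction.
        * apply f2i in E; auto. destruct E as [E _]. apply g2; auto.
    - set (Bs := fun y => exists d, D d /\ phi d = y).
      set (D' := fun y => D y \/ Bs y).
      set (phinv := fun y => epsilon inh (fun d => D d /\ phi d = y)).
      assert (phinvs : forall y, Bs y -> D (phinv y) /\ phi (phinv y) = y).
      { intros y Hy. unfold phinv. apply epsilon_spec with (P := fun d => D d /\ phi d = y). exact Hy. }
      assert (BnD : forall y, Bs y -> ~ D y). { intros y [d [Hd E]]. rewrite <- E. apply p1; auto. }
      set (cval := fun x => if excluded_middle_informative (D x) then x else phinv x).
      set (ctag := fun x => if excluded_middle_informative (D x) then h 0 else h 1).
      assert (cvD : forall x, D' x -> D (cval x)).
      { intros x Hx. unfold cval. destruct (excluded_middle_informative (D x)); auto.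
        destruct Hx; [contradiction|]. apply phinvs; auto. }
      assert (ctD : forall x, D (ctag x)).
      { intros x. unfold ctag. destruct (excluded_middle_informative (D x)); auto. }
      assert (cinj : forall x y, D' x -> D' y -> cval x = cval y -> ctag x = ctag y -> x = y).
      { intros x y Hx Hy E1 E2. unfold cval, ctag in *.
        destruct (excluded_middle_informative (D x)) as [dx|dx];
        destruct (excluded_middle_informative (D y)) as [dy|dy]; auto.
        - contradiction.
        - symmetry in E2; contradiction.
        - destruct Hx as [Hx|Hx]; [contradiction|]. destruct Hy as [Hy|Hy]; [contradiction|].
          destruct (phinvs x Hx) as [_ Ex]. destruct (phinvs y Hy) as [_ Ey].
          rewrite <- Ex, <- Ey, E1. reflexivity. }
      set (psi := fun x y => phi (f2 (f2 (cval x) (cval y)) (f2 (ctag x) (ctag y)))).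
      assert (psiB : forall x y, D' x -> D' y -> Bs (psi x y)).
      { intros x y Hx Hy. exists (f2 (f2 (cval x) (cval y)) (f2 (ctag x) (ctag y))). split; auto. }
      assert (psii : forall x y x' y', D' x -> D' y -> D' x' -> D' y' -> psi x y = psi x' y' -> x = x' /\ y = y').
      { intros x y x' y' Hx Hy Hx' Hy' E. unfold psi in E. apply p2 in E; auto.
        apply f2i in E; auto. destruct E as [E1 E2].
        apply f2i in E1; auto. apply f2i in E2; auto.
        destruct E1, E2. split; apply cinj; auto. }
      set (R' := fun x y z => Rm x y z \/ (D' x /\ D' y /\ ~ (D x /\ D y) /\ z = psi x y)).
      assert (DR' : forall x, Dm R' x <-> D' x).
      { intro x; split.
        - intros [z [H|[H _]]]; auto. left. exists z; auto.
        - intros [H|H].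
          + destruct H as [z Hz]; exists z; left; auto.
          + exists (psi x x); right; repeat split; try (right; auto).
            intros [H1 _]; apply (BnD x); auto. }
      assert (PR' : P R').
      { split; [|split; [|split; [|split; [|split]]]].
        - intros x y Hx Hy. apply DR' in Hx. apply DR' in Hy.
          destruct (classic (D x /\ D y)) as [[dx dy]|Hn].
          + destruct (Tot x y dx dy) as [z Hz]; exists z; left; auto.
          + exists (psi x y); right; auto.
        - intros x y z [H|[Hx [Hy [Hn E]]]].
          + destruct (Dom _ _ _ H) as [a [b c]]. repeat split; apply DR'; left; auto.
          + rewrite E. repeat split; apply DR'; auto. right; apply psiB; auto.
        - intros x y z z' [H|[Hx [Hy [Hn E]]]] [H'|[Hx' [Hy' [Hn' E']]]].
          + eapply Fun; eauto.
          + exfalso; apply Hn'. destruct (Dom _ _ _ H) as [a [b _]]; auto.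
          + exfalso; apply Hn. destruct (Dom _ _ _ H') as [a [b _]]; auto.
          + congruence.
        - intros x y z x' y' [H|[Hx [Hy [Hn E]]]] [H'|[Hx' [Hy' [Hn' E']]]].
          + eapply Inj; eauto.
          + exfalso. destruct (Dom _ _ _ H) as [_ [_ c]]. rewrite E' in c.
            apply (BnD (psi x' y')); auto.
          + exfalso. destruct (Dom _ _ _ H') as [_ [_ c]]. rewrite E in c.
            apply (BnD (psi x y)); auto.
          + apply psii; auto. congruence.
        - apply DR'; left; auto.
        - apply DR'; left; auto. }
      assert (Hc := Hmax R' PR' (fun x y z H => or_introl H)).
      set (b := phi (h 0)).
      assert (Bb : Bs b) by (exists (h 0); split; auto).
      assert (HR : R' b b (psi b b)).
      { right; repeat split; try (right; auto). intros [H _]; apply (BnD b); auto. }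
      apply Hc in HR. destruct (Dom _ _ _ HR) as [Hd _]. apply (BnD b); auto. }
  destruct Hemb as [iota [iD ii]].
  exists (fun p => f2 (iota (fst p)) (iota (snd p))).
  intros [x y] [x' y'] E. simpl in E. apply f2i in E; auto. destruct E as [E1 E2].
  apply ii in E1; apply ii in E2; subst; auto.
Qed.

Lemma pigeon : forall M (f : nat -> nat), (forall n, f n < M) ->
  (forall n m, f n = f m -> n = m) -> False.
Proof.
  induction M; intros f Hb Hi.
  - specialize (Hb 0); lia.
  - destruct (classic (exists n0, f n0 = M)) as [[n0 Hn0]|Hno].
    + apply (IHM (fun n => f (if n <? n0 then n else S n))).
      * intro n. assert (f (if n <? n0 then n else S n) <> M).
        { intro E. rewrite <- Hn0 in E. apply Hi in E. revert E.
          destruct (Nat.ltb_spec n n0); intro E; lia. }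
        specialize (Hb (if n <? n0 then n else S n)). lia.
      * intros n m E. apply Hi in E. revert E.
        destruct (Nat.ltb_spec n n0); destruct (Nat.ltb_spec m n0); intro E; lia.
    + apply (IHM f); auto. intro n. specialize (Hb n).
      assert (f n <> M) by (intro; apply Hno; eauto). lia.
Qed.

Lemma fin_bound (Y : Type) : ~ injT nat Y -> exists (N : nat) (iota : Y -> nat),
  (forall y, iota y < N) /\ (forall x y, iota x = iota y -> x = y).
Proof.
  intros Hn. destruct (cmp Y nat) as [[iota Hi]|H]; [|contradiction].
  destruct (classic (exists N, forall y, iota y < N)) as [[N HN]|Hu].
  - exists N, iota; auto.
  - exfalso. apply Hn.
    assert (Hu' : forall N, exists y, N <= iota y).
    { intro N. apply NNPP; intro H. apply Hu. exists N. intro y.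
      apply NNPP; intro H'; apply H; exists y; lia. }
    destruct (Hu' 0) as [y0 _]. pose (inh := inhabits y0).
    pose (nxt := fun y => epsilon inh (fun y' => S (iota y) <= iota y')).
    assert (Hnxt : forall y, S (iota y) <= iota (nxt y)).
    { intro y; unfold nxt; apply epsilon_spec; apply Hu'. }
    pose (e := fix e n := match n with 0 => y0 | S n => nxt (e n) end).
    assert (mono : forall n m, n < m -> iota (e n) < iota (e m)).
    { intros n m H. induction H; simpl. apply Hnxt. specialize (Hnxt (e m)); lia. }
    exists e. intros n m E. destruct (Nat.lt_trichotomy n m) as [H|[H|H]]; auto;
      apply mono in H; rewrite E in H; lia.
Qed.

Lemma divmod_uniq (a b c d N : nat) : b < N -> d < N -> a * N + b = c * N + d -> a = c /\ b = d.
Proof.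
  intros Hb Hd E. destruct (Nat.lt_trichotomy a c) as [H|[H|H]].
  - exfalso. assert (a * N + N <= c * N) by nia. lia.
  - subst. lia.
  - exfalso. assert (c * N + N <= a * N) by nia. lia.
Qed.

Lemma fin_prod (Y : Type) : ~ injT nat Y -> ~ injT nat (Y*Y).
Proof.
  intros Hn [g Hg]. destruct (fin_bound Y Hn) as [N [iota [Hb Hi]]].
  apply (pigeon (N*N) (fun n => iota (fst (g n)) * N + iota (snd (g n)))).
  - intro n. pose proof (Hb (fst (g n))) as H1. pose proof (Hb (snd (g n))) as H2. nia.
  - intros n m E. apply Hg. apply divmod_uniq in E; [|apply Hb..]. destruct E as [E1 E2].
    destruct (g n), (g m); simpl in *; apply Hi in E1; apply Hi in E2; subst; auto.
Qed.

Lemma fin_sum (Y : Type) : ~ injT nat Y -> ~ injT nat (Y+Y).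
Proof.
  intros Hn [g Hg]. destruct (fin_bound Y Hn) as [N [iota [Hb Hi]]].
  apply (pigeon (N+N) (fun n => match g n with inl y => iota y | inr y => N + iota y end)).
  - intro n. destruct (g n) as [y|y]; specialize (Hb y); lia.
  - intros n m E. apply Hg. destruct (g n) as [y|y]; destruct (g m) as [y'|y'];
      pose proof (Hb y); pose proof (Hb y').
    + f_equal; auto.
    + lia.
    + lia.
    + f_equal; apply Hi; lia.
Qed.

Lemma injT_trans (X Y Z : Type) : injT X Y -> injT Y Z -> injT X Z.
Proof. intros [f Hf] [g Hg]. exists (fun x => g (f x)). auto. Qed.

Lemma small_inj (K X Y : Type) : small K Y -> injT X Y -> small K X.
Proof.
  intros [H1 H2] H3. split.
  - eapply injT_trans; eauto.
  - intro H4. apply H2. eapply injT_trans; eauto.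
Qed.

Lemma prod_inj_l (X Y K : Type) : injT X Y -> injT K (X*Y) -> injT K (Y*Y).
Proof.
  intros [u Hu] [k Hk]. exists (fun z => (u (fst (k z)), snd (k z))).
  intros z z' E. apply Hk. inversion E as [[E1 E2]]. apply Hu in E1.
  destruct (k z), (k z'); simpl in *; subst; auto.
Qed.

Lemma prod_inj_r (X Y K : Type) : injT Y X -> injT K (X*Y) -> injT K (X*X).
Proof.
  intros [u Hu] [k Hk]. exists (fun z => (fst (k z), u (snd (k z)))).
  intros z z' E. apply Hk. inversion E as [[E1 E2]]. apply Hu in E2.
  destruct (k z), (k z'); simpl in *; subst; auto.
Qed.

Lemma small_prod (K X Y : Type) : injT nat K -> small K X -> small K Y -> small K (X*Y).
Proof.
  intros hK [fX nX] [fY nY]. split.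
  - destruct (hess K hK) as [p Hp]. destruct fX as [f Hf], fY as [g Hg].
    exists (fun q => p (f (fst q), g (snd q))). intros [a b] [c d] E. apply Hp in E.
    inversion E. f_equal; auto.
  - intros kXY. destruct (cmp X Y) as [u|u].
    + pose proof (prod_inj_l _ _ _ u kXY) as kYY.
      destruct (classic (injT nat Y)) as [nY'|nY'].
      * apply nY. eapply injT_trans. exact kYY. apply hess; auto.
      * apply (fin_prod Y nY'). eapply injT_trans; eauto.
    + pose proof (prod_inj_r _ _ _ u kXY) as kXX.
      destruct (classic (injT nat X)) as [nX'|nX'].
      * apply nX. eapply injT_trans. exact kXX. apply hess; auto.
      * apply (fin_prod X nX'). eapply injT_trans; eauto.
Qed.

Lemma sum_sq (Y : Type) : injT nat Y -> injT (Y+Y) (Y*Y).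
Proof.
  intros [j Hj]. exists (fun s => match s with inl y => (y, j 0) | inr y => (y, j 1) end).
  intros [a|a] [b|b] E; inversion E; subst; auto.
  - apply Hj in H1; discriminate.
  - apply Hj in H1; discriminate.
Qed.

Lemma sum_inj_l (X Y K : Type) : injT X Y -> injT K (X+Y) -> injT K (Y+Y).
Proof.
  intros [u Hu] [k Hk]. exists (fun z => match k z with inl x => inl (u x) | inr y => inr y end).
  intros z z' E. apply Hk. destruct (k z), (k z'); inversion E; f_equal; auto.
Qed.

Lemma sum_inj_r (X Y K : Type) : injT Y X -> injT K (X+Y) -> injT K (X+X).
Proof.
  intros [u Hu] [k Hk]. exists (fun z => match k z with inl x => inl x | inr y => inr (u y) end).
  intros z z' E. apply Hk. destruct (k z), (k z'); inversion E; f_equal; auto.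
Qed.

Lemma small_sum (K X Y : Type) : injT nat K -> small K X -> small K Y -> small K (X+Y).
Proof.
  intros hK [fX nX] [fY nY]. split.
  - eapply injT_trans; [|apply (hess K hK)].
    destruct hK as [j Hj]. destruct fX as [f Hf], fY as [g Hg].
    exists (fun s => match s with inl x => (f x, j 0) | inr y => (g y, j 1) end).
    intros [a|a] [b|b] E; inversion E; subst; auto.
    + f_equal; auto.
    + apply Hj in H1; discriminate.
    + apply Hj in H1; discriminate.
    + f_equal; auto.
  - intros kXY. destruct (cmp X Y) as [u|u].
    + pose proof (sum_inj_l _ _ _ u kXY) as kYY.
      destruct (classic (injT nat Y)) as [nY'|nY'].
      * apply nY. eapply injT_trans. exact kYY. eapply injT_trans. apply sum_sq; auto. apply hess; auto.
      * apply (fin_sum Y nY'). eapply injT_trans; eauto.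
    + pose proof (sum_inj_r _ _ _ u kXY) as kXX.
      destruct (classic (injT nat X)) as [nX'|nX'].
      * apply nX. eapply injT_trans. exact kXX. eapply injT_trans. apply sum_sq; auto. apply hess; auto.
      * apply (fin_sum X nX'). eapply injT_trans; eauto.
Qed.

Lemma smallS_sub (K X : Type) (A B : mset X) : smallS K B -> subset A B -> smallS K A.
Proof.
  intros HB Hs. unfold smallS in *. eapply small_inj; [exact HB|].
  exists (fun s => exist B (proj1_sig s) (Hs _ (proj2_sig s))).
  intros s s' E. apply sig_inj. apply (f_equal (@proj1_sig _ _)) in E. exact E.
Qed.

Lemma smallS_rng (K X I : Type) (a : I -> X) : small K I -> smallS K (rng a).
Proof.
  intros HI. unfold smallS. eapply small_inj; [exact HI|].
  exists (fun s : {x | rng a x} => proj1_sig (constructive_indefinite_description _ (proj2_sig s))).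
  intros s s' E.
  destruct (constructive_indefinite_description _ (proj2_sig s)) as [i Hi].
  destruct (constructive_indefinite_description _ (proj2_sig s')) as [i' Hi'].
  simpl in E. subst. apply sig_inj. congruence.
Qed.

Lemma smallS_image (K X : Type) (s : X -> X) (A : mset X) :
  (forall x y, s x = s y -> x = y) -> smallS K A -> smallS K (image s A).
Proof.
  intros Hs HA. unfold smallS in *. eapply small_inj; [exact HA|].
  exists (fun y : {x | image s A x} => let w := constructive_indefinite_description _ (proj2_sig y) in
                 exist A (proj1_sig w) (proj1 (proj2_sig w))).
  intros y y' E. simpl in E.
  destruct (constructive_indefinite_description _ (proj2_sig y)) as [x [Ax Ex]].
  destruct (constructive_indefinite_description _ (proj2_sig y')) as [x' [Ax' Ex']].
  simpl in E. apply (f_equal (@proj1_sig _ _)) in E. simpl in E. subst.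
  apply sig_inj. congruence.
Qed.
Set Implicit Arguments.
Unset Strict Implicit.



Lemma mset_ext (X : Type) (A B : mset X) : (forall x, A x <-> B x) -> A = B.
Proof. intro H. apply functional_extensionality; intro x. apply propositional_extensionality; auto. Qed.


Lemma aut_inj (L : lang) (M : structure L) (s : M -> M) : is_aut M s -> forall x y, s x = s y -> x = y.
Proof. intros [[t [H1 H2]] _] x y E. rewrite <- (H1 x), <- (H1 y), E. reflexivity. Qed.

Lemma aut_inv (L : lang) (M : structure L) (s : M -> M) : is_aut M s ->
  exists t, is_aut M t /\ (forall x, t (s x) = x) /\ (forall y, s (t y) = y).
Proof.
  intros Hs. pose proof Hs as [[t [H1 H2]] [Hf Hr]]. exists t. split; [|split; auto].
  split; [|split].
  - exists s; split; auto.
  - intros f args. apply (aut_inj Hs). rewrite H2, Hf. f_equal.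
    apply functional_extensionality; intro k; rewrite H2; auto.
  - intros r args. rewrite (Hr r (fun k => t (args k))).
    replace (fun k => s (t (args k))) with args; [tauto|].
    apply functional_extensionality; intro k; rewrite H2; auto.
Qed.

Lemma aut_comp (L : lang) (M : structure L) (s s' : M -> M) : is_aut M s -> is_aut M s' ->
  is_aut M (fun x => s' (s x)).
Proof.
  intros Hs Hs'. destruct (aut_inv Hs) as [t [_ [T1 T2]]]. destruct (aut_inv Hs') as [t' [_ [T1' T2']]].
  destruct Hs as [_ [Hf Hr]], Hs' as [_ [Hf' Hr']]. split; [|split].
  - exists (fun y => t (t' y)). split; intros; [rewrite T1', T1|rewrite T2, T2']; auto.
  - intros f args. rewrite Hf, Hf'. reflexivity.
  - intros r args. rewrite (Hr r args). apply (Hr' r).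
Qed.

Lemma teval_aut (L : lang) (M : structure L) (s : M -> M) : is_aut M s ->
  forall t e, s (teval e t) = teval (fun n => s (e n)) t.
Proof.
  intros Hs t. induction t as [n|f ts IH]; intro e; simpl; auto.
  destruct Hs as [_ [Hf _]]. rewrite Hf. f_equal. apply functional_extensionality; intro k; auto.
Qed.

Lemma sat_aut (L : lang) (M : structure L) (s : M -> M) : is_aut M s ->
  forall phi e, sat M e phi <-> sat M (fun n => s (e n)) phi.
Proof.
  intros Hs phi. induction phi as [t1 t2|r ts|p IH|p IH q IH'|n p IH]; intro e; simpl.
  - rewrite <- !(teval_aut Hs). split; intro E; [rewrite E; auto|apply (aut_inj Hs); auto].
  - pose proof Hs as [_ [_ Hr]]. rewrite (Hr r).
    replace (fun k => s (teval e (ts k))) with (fun k => teval (fun n => s (e n)) (ts k)); [tauto|].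
    apply functional_extensionality; intro k; rewrite (teval_aut Hs); auto.
  - rewrite IH; tauto.
  - rewrite IH, IH'; tauto.
  - destruct (aut_inv Hs) as [t [_ [T1 T2]]].
    assert (Hu : forall x, (fun m => s (upd e n x m)) = upd (fun m => s (e m)) n (s x)).
    { intro x. apply functional_extensionality; intro m. unfold upd. destruct (Nat.eqb m n); auto. }
    split.
    + intros [x Hx]. exists (s x). rewrite <- Hu. apply (proj1 (IH _)); auto.
    + intros [x Hx]. exists (t x). apply (proj2 (IH _)). rewrite Hu, T2. auto.
Qed.

Lemma teval_ext (L : lang) (M : structure L) : forall t (e e' : nat -> M),
  (forall m, tfv t m -> e m = e' m) -> teval e t = teval e' t.
Proof.
  intro t. induction t as [n|f ts IH]; intros e e' H; simpl in *; auto.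
  f_equal. apply functional_extensionality; intro k. apply IH. intros m Hm; apply H; eauto.
Qed.

Lemma sat_ext (L : lang) (M : structure L) : forall phi (e e' : nat -> M),
  (forall m, fv phi m -> e m = e' m) -> (sat M e phi <-> sat M e' phi).
Proof.
  intros phi. induction phi as [t1 t2|r ts|p IH|p IH q IH'|n p IH]; intros e e' H; simpl in *.
  - rewrite (@teval_ext L M t1 e e'), (@teval_ext L M t2 e e'); [tauto| |]; intros m Hm; apply H; auto.
  - replace (fun k => teval e (ts k)) with (fun k => teval e' (ts k)); [tauto|].
    apply functional_extensionality; intro k. symmetry. apply teval_ext. intros m Hm; apply H; eauto.
  - rewrite (IH e e'); [tauto|auto].
  - rewrite (IH e e'), (IH' e e'); [tauto| |]; intros m Hm; apply H; auto.
  - assert (Hx : forall x, sat M (upd e n x) p <-> sat M (upd e' n x) p).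
    { intro x. apply IH. intros m Hm. unfold upd. destruct (Nat.eqb m n) eqn:E; auto.
      apply H. split; auto. apply Nat.eqb_neq; auto. }
    split; intros [x Hx']; exists x; apply Hx; auto.
Qed.

Lemma fin_collect : forall n (P : fin n -> nat -> Prop),
  (forall k, exists l, forall m, P k m -> In m l) -> exists l, forall k m, P k m -> In m l.
Proof.
  induction n; intros P H.
  - exists nil. intros [k Hk]. lia.
  - set (emb := fun k : fin n => exist (fun j => j < S n) (proj1_sig k) (Nat.lt_lt_succ_r _ _ (proj2_sig k))).
    destruct (IHn (fun k m => P (emb k) m)) as [l' Hl']. { intro k; apply H. }
    destruct (H (exist _ n (Nat.lt_succ_diag_r n))) as [ln Hln].
    exists (ln ++ l'). intros [k Hk] m Hm. apply in_or_app.
    destruct (Nat.eq_dec k n) as [E|E].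
    + left. subst. apply Hln. replace (Nat.lt_succ_diag_r n) with Hk by apply proof_irrelevance. auto.
    + right. assert (Hk' : k < n) by lia. apply (Hl' (exist _ k Hk')). unfold emb; simpl.
      replace (Nat.lt_lt_succ_r k n Hk') with Hk by apply proof_irrelevance. auto.
Qed.

Lemma tfv_finite (L : lang) : forall t : term L, exists l, forall m, tfv t m -> In m l.
Proof.
  intro t. induction t as [n|f ts IH]; simpl.
  - exists (n :: nil). intros m ->. left; auto.
  - destruct (@fin_collect _ (fun k m => tfv (ts k) m) IH) as [l Hl].
    exists l. intros m [k Hk]. eauto.
Qed.

Lemma fv_finite (L : lang) : forall phi : formula L, exists l, forall m, fv phi m -> In m l.
Proof.
  intro phi. induction phi as [t1 t2|r ts|p IH|p IH q IH'|n p IH]; simpl.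
  - destruct (tfv_finite t1) as [l1 H1], (tfv_finite t2) as [l2 H2].
    exists (l1 ++ l2). intros m [Hm|Hm]; apply in_or_app; auto.
  - destruct (@fin_collect _ (fun k m => tfv (ts k) m) (fun k => tfv_finite (ts k))) as [l Hl].
    exists l. intros m [k Hk]. eauto.
  - auto.
  - destruct IH as [l1 H1], IH' as [l2 H2].
    exists (l1 ++ l2). intros m [Hm|Hm]; apply in_or_app; auto.
  - destruct IH as [l H]. exists l. intros m [_ Hm]; auto.
Qed.

Lemma aut_id (L : lang) (M : structure L) : is_aut M (fun x => x).
Proof.
  split; [|split].
  - exists (fun x => x); split; auto.
  - intros; reflexivity.
  - intros; tauto.
Qed.

Lemma conj_refl (L : lang) (M : structure L) (C : mset M) (I : Type) (a : I -> M) : conj M C a a.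
Proof. exists (fun x => x). split; [apply aut_id|split; auto]. Qed.

Lemma conj_sym (L : lang) (M : structure L) (C : mset M) (I : Type) (a a' : I -> M) :
  conj M C a a' -> conj M C a' a.
Proof.
  intros [s [Hs [HC Ha]]]. destruct (aut_inv Hs) as [t [Ht [T1 T2]]].
  exists t. split; [auto|split].
  - intros c Hc. rewrite <- (HC c Hc) at 1. apply T1.
  - intro i. rewrite <- Ha. apply T1.
Qed.

Lemma conj_trans (L : lang) (M : structure L) (C : mset M) (I : Type) (a a' a'' : I -> M) :
  conj M C a a' -> conj M C a' a'' -> conj M C a a''.
Proof.
  intros [s [Hs [HC Ha]]] [s' [Hs' [HC' Ha']]]. exists (fun x => s' (s x)).
  split; [apply aut_comp; auto|split].
  - intros c Hc. rewrite HC, HC'; auto.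
  - intro i. rewrite Ha, Ha'. auto.
Qed.

Lemma conj_mono (L : lang) (M : structure L) (C C' : mset M) (I : Type) (a a' : I -> M) :
  subset C' C -> conj M C a a' -> conj M C' a a'.
Proof. intros Hs [s [H1 [H2 H3]]]. exists s. split; [auto|split; auto]. Qed.

Lemma acl_mono (L : lang) (M : structure L) (A B : mset M) : subset A B -> subset (acl M A) (acl M B).
Proof.
  intros H x [phi [n [e [H1 H2]]]]. exists phi, n, e. split; auto.
Qed.

Lemma closed_inter (L : lang) (M : structure L) (A B : mset M) :
  closed M A -> closed M B -> closed M (inter A B).
Proof.
  intros HA HB x Hx. split.
  - apply HA. eapply acl_mono; [|exact Hx]. intros y [Hy _]; auto.
  - apply HB. eapply acl_mono; [|exact Hx]. intros y [_ Hy]; auto.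
Qed.

Lemma closed_image (L : lang) (M : structure L) (s : M -> M) (A : mset M) :
  is_aut M s -> closed M A -> closed M (image s A).
Proof.
  intros Hs HA b [phi [n [e [Hp [Hsat [l Hl]]]]]].
  destruct (aut_inv Hs) as [t [Ht [T1 T2]]].
  assert (Hb : acl M A (t b)).
  { exists phi, n, (fun m => t (e m)). split; [|split].
    - intros m Hm Hmn. destruct (Hp m Hm Hmn) as [x [Ax Ex]]. rewrite <- Ex, T1. auto.
    - apply (proj1 (sat_aut Ht phi _)) in Hsat.
      replace (upd (fun m => t (e m)) n (t b)) with (fun m => t (upd e n b m)); auto.
      apply functional_extensionality; intro m; unfold upd; destruct (Nat.eqb m n); auto.
    - exists (map t l). intros x Hx. apply (proj1 (sat_aut Hs _ _)) in Hx.
      replace (fun m => s (upd (fun m0 => t (e m0)) n x m)) with (upd e n (s x)) in Hx.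
      + apply Hl in Hx. rewrite <- (T1 x). apply in_map; auto.
      + apply functional_extensionality; intro m; unfold upd; destruct (Nat.eqb m n); auto. }
  exists (t b). split; auto.
Qed.

Lemma rng_conj (L : lang) (M : structure L) (C : mset M) (I : Type) (x y : I -> M) (s : M -> M) :
  (forall i, s (x i) = y i) -> rng y = image s (rng x).
Proof.
  intros H. apply mset_ext; intro z; split.
  - intros [i <-]. exists (x i). split; [exists i|]; auto.
  - intros [w [[i <-] <-]]. exists i; auto.
Qed.

Lemma closed_conj (L : lang) (M : structure L) (C : mset M) (I : Type) (x y : I -> M) :
  conj M C x y -> closed M (rng x) -> closed M (rng y).
Proof.
  intros [s [Hs [_ Ha]]] Hx. rewrite (@rng_conj L M C I x y s Ha). apply closed_image; auto.
Qed.


Lemma list_max (J : Type) (lt : J -> J -> Prop) : well_order lt ->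
  forall l : list J, (exists j, In j l) -> exists m, In m l /\ forall j, In j l -> j = m \/ lt j m.
Proof.
  intros [_ [Htr [_ Htri]]] l. induction l as [|x l0 IH]; intros [j Hj].
  - destruct Hj.
  - destruct (classic (exists j, In j l0)) as [Hne|He].
    + destruct (IH Hne) as [m0 [Hm0 Hmax]].
      destruct (Htri x m0) as [H|[H|H]].
      * exists m0. split; [right; auto|]. intros j0 [<-|Hj0]; auto.
      * exists m0. split; [right; auto|]. intros j0 [<-|Hj0]; auto.
      * exists x. split; [left; auto|]. intros j0 [<-|Hj0]; auto.
        destruct (Hmax j0 Hj0) as [->|Hl]; right; eauto.
    + exists x. split; [left; auto|]. intros j0 [<-|Hj0]; auto. exfalso; eauto.
Qed.

Lemma list_decomp (J : Type) (lt : J -> J -> Prop) : well_order lt ->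
  forall l : list J, (exists j, In j l) -> exists m l', In m l /\
    (forall j, In j l <-> j = m \/ In j l') /\ (forall j, In j l' -> lt j m) /\
    length l' < length l.
Proof.
  intros Hwo l Hne. destruct (list_max Hwo Hne) as [m [Hm Hmax]].
  set (deq := fun x y : J => excluded_middle_informative (x = y)).
  exists m, (remove deq m l). split; [auto|split; [|split]].
  - intro j; split.
    + intro Hj. destruct (classic (j = m)) as [E|E]; auto. right. apply in_in_remove; auto.
    + intros [->|Hj]; auto. apply (in_remove deq l j m Hj).
  - intros j Hj. destruct (in_remove deq l j m Hj) as [Hj1 Hj2].
    destruct (Hmax j Hj1) as [E|E]; [contradiction|auto].
  - apply remove_length_lt; auto.
Qed.

Theorem lemma7p6 (L : lang) (M : structure L) (K : Type)
  (ind : mset M -> mset M -> mset M -> Prop)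
  (HM : monster M K) (Hind : free_amalgamation M K ind)
  (Ia Ib : Type) (a : Ia -> M) (b : Ib -> M)
  (HIa : small K Ia) (HIb : small K Ib)
  (Ha : closed M (rng a)) (Hb : closed M (rng b))
  (J : Type) (lt : J -> J -> Prop) (Hwo : well_order lt) (HJ : small K J)
  (j0 : J) (Hj0 : forall j, ~ lt j j0)
  (bs : J -> Ib -> M)
  (Hseq : indep_seq M ind (inter (rng a) (rng b)) lt j0 bs)
  (Hb0 : bs j0 = b) :
  exists astar : Ia -> M,
    forall j, conj M (inter (rng a) (rng b)) (tcat a b) (tcat astar (bs j)).
Proof.
  destruct Hind as [Hinv [Hmon [Hsym [Htr [Hex [Hst [Hfree Hcl]]]]]]].
  destruct HM as [hK [_ Hhom]].
  assert (hK' : injT nat K) by exact hK.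
  set (C := inter (rng a) (rng b)) in *.
  assert (SM : forall (f : J -> Ib -> M) (D : mset M),
            (forall x, D x -> rng a x \/ exists j i, f j i = x) -> smallS K D).
  { intros f D HD. eapply smallS_sub.
    - apply (@smallS_rng K M (Ia + (J*Ib))
              (fun w => match w with inl i => a i | inr p => f (fst p) (snd p) end)).
      apply small_sum; auto. apply small_prod; auto.
    - intros x Hx. destruct (HD x Hx) as [[i Ei]|[j [i Ei]]];
        [exists (inl i)|exists (inr (j,i))]; auto. }
  assert (sC : smallS K C) by (apply (SM bs); intros x [Hx _]; auto).
  assert (sa : smallS K (rng a)) by (apply (SM bs); auto).
  assert (Cc : closed M C) by (apply closed_inter; auto).
  assert (Ca : subset C (rng a)) by (intros x [Hx _]; auto).
  assert (Cb : subset C (rng b)) by (intros x [_ Hx]; auto).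
  assert (bsc : forall j, conj M C b (bs j)).
  { intro j. rewrite <- Hb0. exact (proj1 (Hseq j)). }
  assert (Cconj : forall (t : Ib -> M), conj M C b t -> subset C (rng t)).
  { intros t [s [Hs [HC Ht]]] c Hc. destruct (Cb c Hc) as [i Ei]. exists i.
    rewrite <- Ht, Ei. apply HC; auto. }
  assert (bsC : forall j, subset C (rng (bs j))) by (intro j; apply Cconj; auto).
  assert (bscl : forall j, closed M (rng (bs j))) by (intro j; eapply closed_conj; eauto).
  set (Ubs := fun j => fun x => exists j' i, lt j' j /\ bs j' i = x).
  assert (bsind : forall j, ind (rng (bs j)) C (Ubs j)) by (intro j; exact (proj2 (Hseq j))).
  assert (step : forall (j : J) (f : J -> Ib -> M), exists t : Ib -> M,
      conj M (rng a) b t /\ ind (rng t) (rng a) (fun x => exists j' i, lt j' j /\ f j' i = x)).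
  { intros j f.
    destruct (Hex (rng a) (fun x => exists j' i, lt j' j /\ f j' i = x) Ib b) as [t [H1 H2]]; auto.
    - apply (SM f). intros x [j' [i [_ E]]]; right; eauto.
    - exists t; split; auto. }
  set (pick := fun j f => proj1_sig (constructive_indefinite_description _ (step j f))).
  assert (pickP : forall j f, conj M (rng a) b (pick j f) /\
             ind (rng (pick j f)) (rng a) (fun x => exists j' i, lt j' j /\ f j' i = x)).
  { intros j f. unfold pick. destruct (constructive_indefinite_description _ (step j f)); auto. }
  pose proof Hwo as [Hwf [Htrans [Hirr Htri]]].
  set (F := fun (j : J) (rec : forall j', lt j' j -> Ib -> M) =>
             pick j (fun j' => match excluded_middle_informative (lt j' j) with
                               | left H => rec j' H | right _ => b end)).
  set (bp := Fix Hwf (fun _ => Ib -> M) F).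
  assert (bpeq : forall j, bp j = pick j (fun j' => if excluded_middle_informative (lt j' j) then bp j' else b)).
  { intro j. unfold bp. rewrite Fix_eq.
    - unfold F. reflexivity.
    - intros x f g Hfg. unfold F. f_equal. apply functional_extensionality; intro j'.
      destruct (excluded_middle_informative (lt j' x)); auto. }
  set (Ubp := fun j => fun x => exists j' i, lt j' j /\ bp j' i = x).
  assert (bpc : forall j, conj M (rng a) b (bp j) /\ ind (rng (bp j)) (rng a) (Ubp j)).
  { intro j. destruct (pickP j (fun j' => if excluded_middle_informative (lt j' j) then bp j' else b)) as [H1 H2].
    rewrite <- bpeq in H1, H2. split; auto.
    replace (Ubp j) with (fun x => exists j' i, lt j' j /\
       (if excluded_middle_informative (lt j' j) then bp j' else b) i = x); auto.
    apply mset_ext; intro x. split.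
    - intros [j' [i [Hl E]]]. exists j', i. split; auto.
      destruct (excluded_middle_informative (lt j' j)); [auto|contradiction].
    - intros [j' [i [Hl E]]]. exists j', i. split; auto.
      destruct (excluded_middle_informative (lt j' j)); [auto|contradiction]. }
  assert (meet : forall j x, rng a x -> rng (bp j) x -> C x).
  { intros j x Hax [i Ei]. destruct (proj1 (bpc j)) as [s [Hs [Hfix Hb']]].
    split; auto. exists i. apply (aut_inj Hs). rewrite Hb', Ei. symmetry; apply Hfix; auto. }
  assert (bpcC : forall j, conj M C b (bp j)) by (intro j; eapply conj_mono; [exact Ca|apply (bpc j)]).
  assert (bpC : forall j, subset C (rng (bp j))) by (intro j; apply Cconj; auto).
  assert (bpind : forall j, ind (rng (bp j)) C (Ubp j)).
  { intro j. apply (Hfree (rng (bp j)) (Ubp j) (rng a) C).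
    - apply (SM bp). intros x [i Ei]; right; eauto.
    - apply (SM bp). intros x [j' [i [_ Ei]]]; right; eauto.
    - exact sa.
    - exact sC.
    - apply (proj2 (bpc j)).
    - intros x [Hax [Hx|[j' [i [_ Ex]]]]].
      + eapply meet; eauto.
      + apply (meet j'); auto. exists i; auto.
    - exact Ca. }
  assert (bpcl : forall j, closed M (rng (bp j))) by (intro j; eapply closed_conj; [apply bpcC|exact Hb]).
  set (Ebs := fun (l : list J) => fun x => C x \/ exists j i, In j l /\ bs j i = x).
  set (Ebp := fun (l : list J) => fun x => C x \/ exists j i, In j l /\ bp j i = x).
  assert (sEbs : forall l, smallS K (Ebs l)).
  { intro l. apply (SM bs). intros x [[Hx _]|[j [i [_ E]]]]; [left; auto|right; eauto]. }
  assert (sEbp : forall l, smallS K (Ebp l)).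
  { intro l. apply (SM bp). intros x [[Hx _]|[j [i [_ E]]]]; [left; auto|right; eauto]. }
  assert (sbs : forall j, smallS K (rng (bs j))).
  { intro j. apply (SM bs). intros x [i E]; right; eauto. }
  assert (sbp : forall j, smallS K (rng (bp j))).
  { intro j. apply (SM bp). intros x [i E]; right; eauto. }
  assert (sUbs : forall j, smallS K (Ubs j)).
  { intro j. apply (SM bs). intros x [j' [i [_ E]]]; right; eauto. }
  assert (sUbp : forall j, smallS K (Ubp j)).
  { intro j. apply (SM bp). intros x [j' [i [_ E]]]; right; eauto. }
  assert (ClosedE : forall n l, length l <= n -> closed M (Ebs l)).
  { induction n as [|n IHn]; intros l Hlen.
    - destruct l; [|simpl in Hlen; lia].
      replace (Ebs nil) with C; auto. apply mset_ext; intro x; split; [intro; left; auto|].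
      intros [H|[j [i [[] _]]]]; auto.
    - destruct (classic (exists j, In j l)) as [Hne|He].
      + destruct (list_decomp Hwo Hne) as [m [l' [Hm [Hl [Hlt Hlen']]]]].
        destruct (classic (exists j, In j l')) as [[j1 Hj1]|He'].
        * assert (Hc' : closed M (Ebs l')) by (apply IHn; lia).
          assert (Hu : closed M (union (rng (bs m)) (Ebs l'))).
          { apply (Hcl (rng (bs m)) (Ebs l') C); auto.
            - intros c Hc. split; [apply bsC; auto|left; auto].
            - apply (Hmon (rng (bs m)) (rng (bs m)) (Ubs m) (Ebs l') C); auto.
              + intros x Hx; auto.
              + intros x [Hx|[j [i [Hj E]]]].
                * destruct (bsC j1 x Hx) as [i E]. exists j1, i. split; auto.
                * exists j, i. split; auto. }
          replace (Ebs l) with (union (rng (bs m)) (Ebs l')); auto.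
          apply mset_ext; intro x; split.
          -- intros [[i E]|[Hx|[j [i [Hj E]]]]].
             ++ right. exists m, i. auto.
             ++ left; auto.
             ++ right. exists j, i. split; auto. apply Hl; auto.
          -- intros [Hx|[j [i [Hj E]]]].
             ++ right; left; auto.
             ++ apply Hl in Hj. destruct Hj as [->|Hj].
                ** left. exists i; auto.
                ** right; right. exists j, i; auto.
        * replace (Ebs l) with (rng (bs m)); auto.
          apply mset_ext; intro x; split.
          -- intros [i E]. right. exists m, i. auto.
          -- intros [Hx|[j [i [Hj E]]]].
             ++ apply bsC; auto.
             ++ apply Hl in Hj. destruct Hj as [->|Hj]; [exists i; auto|exfalso; eauto].
      + replace (Ebs l) with C; auto. apply mset_ext; intro x; split; [intro; left; auto|].
        intros [H|[j [i [Hj _]]]]; auto. exfalso; eauto. }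
  assert (Claim : forall n l, length l <= n -> exists tau, is_aut M tau /\ (forall c, C c -> tau c = c) /\
                    (forall j i, In j l -> tau (bp j i) = bs j i)).
  { induction n as [|n IHn]; intros l Hlen.
    - destruct l; [|simpl in Hlen; lia].
      exists (fun x => x). split; [apply aut_id|split; auto]. intros j i [].
    - destruct (classic (exists j, In j l)) as [Hne|He].
      2:{ exists (fun x => x). split; [apply aut_id|split; auto]. intros j i Hj; exfalso; eauto. }
      destruct (list_decomp Hwo Hne) as [m [l' [Hm [Hl [Hlt Hlen']]]]].
      assert (cm : conj M C (bp m) (bs m)) by (eapply conj_trans; [apply conj_sym, bpcC|apply bsc]).
      destruct (classic (exists j, In j l')) as [[j1 Hj1]|He'].
      2:{ destruct cm as [s [Hs [HC Hv]]]. exists s. split; [auto|split; auto].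
          intros j i Hj. apply Hl in Hj. destruct Hj as [->|Hj]; auto. exfalso; eauto. }
      destruct (IHn l') as [tau' [Ht' [HtC Htv]]]; [lia|].
      set (E' := Ebs l').
      set (x := fun i => tau' (bp m i)).
      assert (cx : conj M C (bp m) x) by (exists tau'; split; auto).
      assert (cxb : conj M C x (bs m)) by (eapply conj_trans; [apply conj_sym, cx|exact cm]).
      assert (rE : rng (fun z : {z | E' z} => proj1_sig z) = E').
      { apply mset_ext; intro z; split.
        - intros [[w Hw] E]. simpl in E. rewrite <- E; auto.
        - intros Hz. exists (exist _ z Hz). auto. }
      assert (Ebp_sub : subset (Ebp l') (Ubp m)).
      { intros y [Hy|[j [i [Hj E]]]].
        - destruct (bpC j1 y Hy) as [i E]. exists j1, i. split; auto.
        - exists j, i. split; auto. }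
      assert (ind1 : ind (rng (bp m)) C (Ebp l')).
      { apply (Hmon (rng (bp m)) (rng (bp m)) (Ubp m) (Ebp l') C); auto. intros y Hy; auto. }
      assert (indx : ind (rng x) C E').
      { assert (H := Hinv (rng (bp m)) (Ebp l') C tau' (sbp m) (sEbp l') sC Ht' ind1).
        assert (e3 : image tau' (Ebp l') = E').
        { apply mset_ext; intro y; split.
          + intros [w [[Hw|[j [i [Hj E]]]] Ew]].
            * left. rewrite <- Ew, HtC; auto.
            * right. exists j, i. split; auto. rewrite <- Ew, <- E. symmetry. apply Htv. auto.
          + intros [Hy|[j [i [Hj E]]]].
            * exists y. split; [left; auto|apply HtC; auto].
            * exists (bp j i). split; [right; exists j, i; auto|]. rewrite <- E. apply Htv. auto. }
        assert (e2 : image tau' C = C).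
        { apply mset_ext; intro y; split.
          + intros [w [Hw Ew]]. rewrite <- Ew, HtC; auto.
          + intros Hy. exists y. split; auto. }
        assert (e1 : image tau' (rng (bp m)) = rng x).
        { symmetry. apply (@rng_conj L M C Ib (bp m) x tau'). intro i; auto. }
        rewrite e1, e2, e3 in H. exact H. }
      assert (indb : ind (rng (bs m)) C E').
      { apply (Hmon (rng (bs m)) (rng (bs m)) (Ubs m) E' C); auto.
        - intros y Hy; auto.
        - intros y [Hy|[j [i [Hj E]]]].
          + destruct (bsC j1 y Hy) as [i E]. exists j1, i. split; auto.
          + exists j, i. split; auto. }
      assert (Hstat := Hst C Ib {z | E' z} x (bs m) (fun z => proj1_sig z) sC HIb (sEbs l') Cc).
      rewrite rE in Hstat.
      destruct Hstat as [rho [Hr [HrC Hrv]]].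
      + eapply closed_conj; [exact cx|apply bpcl].
      + apply bscl.
      + apply (ClosedE (length l')); auto.
      + intros c Hc. split; [apply Cconj; [eapply conj_trans; [apply bpcC|exact cx]|auto]|left; auto].
      + exact indx.
      + exact indb.
      + exact cxb.
      + exists (fun y => rho (tau' y)). split; [apply aut_comp; auto|split].
        * intros c Hc. rewrite HtC, HrC; auto.
        * intros j i Hj. apply Hl in Hj. destruct Hj as [->|Hj].
          -- exact (Hrv (inl i)).
          -- rewrite Htv; auto.
             assert (HE : E' (bs j i)) by (right; exists j, i; auto).
             exact (Hrv (inr (exist _ (bs j i) HE))). }
  set (Iw := ({c | C c} + (J * Ib))%type).
  set (u := fun w : Iw => match w with inl c => proj1_sig c | inr p => bp (fst p) (snd p) end).
  set (u' := fun w : Iw => match w with inl c => proj1_sig c | inr p => bs (fst p) (snd p) end).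
  destruct (Hhom Iw (@small_sum K _ _ hK' sC (@small_prod K J Ib hK' HJ HIb)) u u') as [sig [Hsig Hsv]].
  { intros phi g. destruct (fv_finite phi) as [V HV].
    set (l := map (fun m => match g m with inl _ => j0 | inr p => fst p end) V).
    destruct (Claim (length l) l (le_n _)) as [tau [Ht [HtC Htv]]].
    rewrite (sat_aut Ht phi (fun m => u (g m))).
    apply sat_ext. intros m Hm. unfold u, u'. destruct (g m) as [[c Hc]|[j i]] eqn:Eg; simpl.
    - apply HtC; auto.
    - apply Htv. unfold l. apply in_map_iff. exists m. rewrite Eg. split; auto. }
  exists (fun i => sig (a i)). intro j.
  destruct (bpc j) as [[s [Hs [Hfa Hfb]]] _].
  exists (fun x => sig (s x)). split; [apply aut_comp; auto|split].
  - intros c Hc. rewrite (Hfa c (Ca c Hc)). exact (Hsv (inl (exist _ c Hc))).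
  - intros [i|i]; simpl.
    + rewrite Hfa; auto. exists i; auto.
    + rewrite Hfb. exact (Hsv (inr (j, i))).
Qed.
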